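(* Let $F$ be a finite field of characteristic $3$. Let $k\ge 0$ be an integer, $m=3k+1$, and $t$ an integer with $t^3\equiv 1\pmod m$ and $\gcd(m,t-1)=1$. Let $G=T_{3m}=\langle x,y\mid x^m=y^3=1,\ y^{-1}xy=x^t\rangle$ (of order $3m$), $FG$ its group algebra, and $H=\langle x\rangle$. Then $J(FG)\cap\Delta(G,H)=0$.
   Context: $J(FG)$ is the Jacobson radical of $FG$. $H=\langle x\rangle$ is a normal subgroup of $G$, and $\Delta(G,H)$ is the ideal of $FG$ generated by $\{h-1\mid h\in H\}$. *)

(* Defs.v *)
From HB Require Import structures.
From mathcomp Require Import all_boot all_algebra all_fingroup.
Set Implicit Arguments. Unset Strict Implicit. Unset Printing Implicit Defensive.
Import GRing.Theory.
Local Open Scope ring_scope.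

(* Group algebra F[gT] of a finite group gT over a finite field F, realised as
   functions gT -> F with the convolution product (NOT the pointwise product). *)
Section GroupAlgebra.
Variables (F : finFieldType) (gT : finGroupType).

Definition galg := {ffun gT -> F}.

Definition gmul (a b : galg) : galg :=
  [ffun g => \sum_(h : gT) a h * b (h^-1 * g)%g].

Definition gdelta (g : gT) : galg := [ffun z => (z == g)%:R].

Definition left_idealb (I : {set galg}) : bool :=
  [&& (0 : galg) \in I,
      [forall a in I, forall b in I, (a - b) \in I] &
      [forall r : galg, forall a in I, gmul r a \in I]].

Definition two_sided_idealb (I : {set galg}) : bool :=
  left_idealb I && [forall r : galg, forall a in I, gmul a r \in I].

Definition maximal_left_idealb (I : {set galg}) : bool :=
  [&& left_idealb I, I != [set: galg] &
      [forall K : {set galg}, (left_idealb K && (I \subset K)) ==>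
                               ((K == I) || (K == [set: galg]))]].

Definition jacobson : {set galg} :=
  \bigcap_(I | maximal_left_idealb I) I.

Definition rel_aug_ideal (H : {set gT}) : {set galg} :=
  \bigcap_(I | two_sided_idealb I &&
               [forall h in H, gdelta h - gdelta 1%g \in I]) I.

End GroupAlgebra.

(* Main.v *)
Require Import Defs.
From HB Require Import structures.
From mathcomp Require Import all_boot all_algebra all_fingroup.
From mathcomp Require Import all_solvable.
From mathcomp Require Import zify ring.
Set Implicit Arguments. Unset Strict Implicit. Unset Printing Implicit Defensive.
Import GRing.Theory.

Module Part1.
Local Open Scope ring_scope.

Lemma tr_nilpotent (F : fieldType) n (A : 'M[F]_n) N :
  A ^+ N = 0 -> \tr A = 0.
Proof.
case: n A => [|n] A AN; first by rewrite /mxtrace big_ord0.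
have n_gt0 : (0 < n.+1)%N by [].
set B : 'M[{poly F}]_n.+1 := map_mx polyC A.
have cXB : GRing.comm ('X%:M : 'M[{poly F}]_n.+1) B.
  by rewrite /GRing.comm -!mulmxE scalar_mxC.
have BN : B ^+ N = 0.
  by rewrite /B -rmorphXn AN; apply/matrixP=> i j; rewrite !mxE. 
have XN : ('X%:M : 'M[{poly F}]_n.+1) ^+ N = ('X ^+ N)%:M.
  elim: N {AN BN} => [|N IH]; first by rewrite !expr0.
  by rewrite !exprS IH -mulmxE -scalar_mxM.
have := subrXX_comm N cXB.
rewrite BN subr0 XN => /(congr1 determinant).
rewrite det_scalar -mulmxE det_mulmx => Hd.
have : char_poly A %| ('X - 0%:P) ^+ (N * n.+1).
  rewrite subr0 exprM Hd /char_poly /char_poly_mx; apply: dvdp_mulr.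
  exact: dvdpp.
case/dvdp_exp_XsubCP => k _; rewrite subr0.
rewrite eqp_monic ?char_poly_monic ?monicXn // => /eqP Hc.
have : size (char_poly A) = n.+2 by rewrite size_char_poly.
rewrite Hc size_polyXn => -[Hk].
have := char_poly_trace A n_gt0.
rewrite Hc coefXn Hk.
rewrite /= eqn_leq ltnn /= => /esym/eqP.
by rewrite andbF oppr_eq0 => /eqP.
Qed.

Section Galg.
Variables (F : finFieldType) (gT : finGroupType).
Local Notation A := (galg F gT).
Implicit Types a b c : A.

Lemma gmulA a b c : gmul (gmul a b) c = gmul a (gmul b c).
Proof.
apply/ffunP=> g; rewrite !ffunE.
under eq_bigr do rewrite ffunE mulr_suml.
rewrite exchange_big /=; apply: eq_bigr => k _.
rewrite ffunE mulr_sumr.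
rewrite (reindex_inj (mulgI k)) /=.
apply: eq_bigr => l _; by rewrite mulrA mulKg invMg mulgA.
Qed.

Lemma gmul1l a : gmul (gdelta F 1%g) a = a.
Proof.
apply/ffunP=> g; rewrite ffunE (bigD1 1%g) //= big1 => [|h /negPf hn1].
  by rewrite ffunE eqxx mul1r invg1 mul1g addr0.
by rewrite ffunE hn1 mul0r.
Qed.

Lemma gmul1r a : gmul a (gdelta F 1%g) = a.
Proof.
apply/ffunP=> g; rewrite ffunE (bigD1 g) //= big1 => [|h /negPf hn1].
  by rewrite ffunE mulVg eqxx mulr1 addr0.
rewrite ffunE.
have -> : (h^-1 * g == 1)%g = false.
  by apply/negbTE; apply: contraFN hn1 => /eqP e; rewrite -(mulKVg h g) e mulg1.
by rewrite mulr0.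
Qed.

Lemma gmulBl a b c : gmul (a - b) c = gmul a c - gmul b c.
Proof.
by apply/ffunP=> g; rewrite !ffunE -sumrB; apply: eq_bigr => h _; rewrite !ffunE mulrBl.
Qed.

Lemma gmulBr a b c : gmul a (b - c) = gmul a b - gmul a c.
Proof.
by apply/ffunP=> g; rewrite !ffunE -sumrB; apply: eq_bigr => h _; rewrite !ffunE mulrBr.
Qed.

Lemma gmul0r a : gmul 0 a = 0.
Proof. by apply/ffunP=> g; rewrite !ffunE big1 // => h _; rewrite ffunE mul0r. Qed.

Lemma gmulr0 a : gmul a 0 = 0.
Proof. by apply/ffunP=> g; rewrite !ffunE big1 // => h _; rewrite ffunE mulr0. Qed.


Lemma lidP (I : {set A}) : left_idealb I ->
  [/\ 0 \in I, {in I &, forall a b, a - b \in I} & forall r, {in I, forall a, gmul r a \in I}].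
Proof.
case/and3P=> I0 /forallP IB /forallP IM; split => //.
  by move=> a b aI bI; move: (IB a); rewrite aI /= => /forall_inP; apply.
by move=> r a aI; move: (IM r) => /forall_inP; apply.
Qed.

Lemma J_left r a : a \in jacobson F gT -> gmul r a \in jacobson F gT.
Proof.
move=> /bigcapP aJ; apply/bigcapP => I Imax; have /and3P[/lidP[_ _ IM] _ _] := Imax.
apply: IM; apply: aJ; exact: Imax.
Qed.

Lemma exists_max (K : {set A}) : left_idealb K -> K != setT ->
  exists2 M, maximal_left_idealb M & K \subset M.
Proof.
move=> lK KT.
pose P (S : {set A}) := [&& left_idealb S, K \subset S & S != setT].
have PK : P K by rewrite /P lK subxx KT.
case: (@arg_maxnP _ K P (fun S => #|S|) PK) => S /and3P[lS KS ST] Smax.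
exists S => //; rewrite /maximal_left_idealb lS ST /=.
apply/forallP=> K2; apply/implyP=> /andP[lK2 SK2].
case: (K2 =P setT) => [->|/eqP K2T]; first by apply/orP; right.
have PK2 : P K2 by rewrite /P lK2 K2T (subset_trans KS SK2).
have := Smax _ PK2 => le.
by apply/orP; left; rewrite eq_sym eqEcard SK2; exact: le.
Qed.

Lemma J_idem b : b \in jacobson F gT -> gmul b b = b -> b = 0.
Proof.
move=> bJ bb; apply/eqP; apply/negPn/negP => b0.
pose K := [set c : A | gmul c b == 0].
have lK : left_idealb K.
  apply/and3P; split; first by rewrite inE gmul0r.
    apply/forallP=> u; apply/implyP; rewrite inE => /eqP u0.
    apply/forallP=> v; apply/implyP; rewrite inE => /eqP v0.
    by rewrite inE gmulBl u0 v0 subrr.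
  apply/forallP=> r; apply/forallP=> u; apply/implyP; rewrite inE => /eqP u0.
  by rewrite inE gmulA u0 gmulr0.
have bK : b \notin K by rewrite inE bb.
have KT : K != setT by apply: contraNneq bK => ->; rewrite inE.
have [M Mmax KM] := exists_max lK KT.
have /and3P[/lidP[M0 MB MM] MT _] := Mmax.
have bM : b \in M by move/bigcapP: bJ; apply.
have b1M : gdelta F 1%g - b \in M.
  by apply: (subsetP KM); rewrite inE gmulBl gmul1l bb subrr.
have oneM : gdelta F 1%g \in M.
  have := MB _ _ bM (MB _ _ M0 b1M).
  by rewrite sub0r opprB opprB addrC subrK.
move/negP: MT; apply; apply/eqP/setP => r; rewrite inE.
by rewrite -(gmul1r r); apply: MM.
Qed.

Definition cpow c n := iter n (gmul c) (gdelta F 1%g).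

Lemma cpowD c i j : cpow c (i + j) = gmul (cpow c i) (cpow c j).
Proof.
elim: i => [|i IH]; first by rewrite add0n /= gmul1l.
by rewrite addSn /= IH gmulA.
Qed.

Lemma cpowSr c n : cpow c n.+1 = gmul (cpow c n) c.
Proof. by rewrite -addn1 cpowD /= gmul1r. Qed.

Lemma J_nil c : c \in jacobson F gT -> exists N, cpow c N = 0.
Proof.
move=> cJ.
pose f (i : 'I_#|A|.+1) := cpow c i.
have : ~~ injectiveb f.
  apply/negP => /injectiveP/leq_card; rewrite card_ord ltnn. done.
case/injectivePn => i [j] ij fij.
wlog lt_ij : i j ij fij / (i < j)%N.
  move=> W; case: (ltngtP i j) => [lij|lji|eij].
  - exact: W ij fij lij.
  - by apply: (W j i) => //; rewrite eq_sym.
  - by move/eqP: ij; case; apply: val_inj.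
set p := (j - i)%N.
have per n : (i <= n)%N -> cpow c (n + p) = cpow c n.
  move=> le_in.
  have -> : (n + p = (n - i) + j)%N by rewrite /p; lia.
  rewrite cpowD; move: fij; rewrite /f => <-; rewrite -cpowD.
  by rewrite subnK.
have perq q n : (i <= n)%N -> cpow c (n + q * p) = cpow c n.
  elim: q n => [|q IH] n le_in; first by rewrite mul0n addn0.
  by rewrite mulSn addnA IH ?per // (leq_trans le_in) ?leq_addr.
set N := (i.+1 * p)%N.
have pgt0 : (0 < p)%N by rewrite /p subn_gt0.
have Ngei : (i <= N)%N by rewrite /N; nia.
exists N.
apply: J_idem.
  have : (0 < N)%N by rewrite /N muln_gt0.
  case: N Ngei => // N' _ _; rewrite cpowSr; exact: J_left.
by rewrite -cpowD {1}/N perq.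
Qed.

Lemma sum_enum (R : nmodType) (Fn : gT -> R) :
  \sum_(i < #|gT|) Fn (enum_val i) = \sum_g Fn g.
Proof. by rewrite (reindex _ (onW_bij _ (@enum_val_bij gT))). Qed.

Variable (Y : {set gT}) (rep : gT -> gT).
Hypothesis repY : forall g u, u \in Y -> rep (g * u)%g = rep g.
Hypothesis repin : forall g, (g^-1 * rep g)%g \in Y.

Definition Mx (b : A) : 'M[F]_#|gT| :=
  \matrix_(i, j) \sum_h b h * (rep (h^-1 * enum_val i)%g == enum_val j)%:R.

Lemma repK l v : rep (l^-1 * rep v)%g = rep (l^-1 * v)%g.
Proof.
by rewrite -(repY (l^-1 * v) (repin v)) -mulgA mulKVg.
Qed.

Lemma MxM a b : Mx (gmul a b) = Mx a *m Mx b.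
Proof.
apply/matrixP=> i k; rewrite !mxE.
set g := enum_val i; set w := enum_val k.
under [RHS]eq_bigr do rewrite !mxE.
rewrite (sum_enum (fun z => (\sum_h a h * (rep (h^-1 * g)%g == z)%:R) *
   (\sum_h b h * (rep (h^-1 * z)%g == w)%:R))).
under [RHS]eq_bigr do rewrite mulr_suml.
rewrite exchange_big /=.
under eq_bigr do rewrite ffunE mulr_suml.
rewrite exchange_big /=; apply: eq_bigr => h _.
rewrite [RHS](bigD1 (rep (h^-1 * g))%g) //= [X in _ + X]big1 => [|z /negPf zn]; last first.
  by rewrite eq_sym zn mulr0 mul0r.
rewrite eqxx mulr1 addr0 mulr_sumr.
rewrite (reindex_inj (mulgI h)) /=.
apply: eq_bigr => l _; rewrite repK mulKg invMg -mulgA.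
by rewrite mulrA.
Qed.

Lemma Mx0 : Mx 0 = 0.
Proof. by apply/matrixP=> i j; rewrite !mxE big1 // => h _; rewrite ffunE mul0r. Qed.

Lemma Mx_cpow c n : Mx (cpow c n.+1) = Mx c ^+ n.+1.
Proof.
elim: n => [|n IH]; first by rewrite /= gmul1r expr1.
by rewrite exprS -IH -mulmxE -MxM.
Qed.

Lemma trJ b : b \in jacobson F gT -> \tr (Mx b) = 0.
Proof.
case/J_nil => N bN; apply: (@tr_nilpotent _ _ _ N.+1).
by rewrite -Mx_cpow /= bN gmulr0 Mx0.
Qed.

Lemma trMx b : \tr (Mx b) =
  \sum_h b h * \sum_g (rep (h^-1 * g)%g == g)%:R.
Proof.
rewrite /mxtrace; under eq_bigr do rewrite mxE.
rewrite (sum_enum (fun g => \sum_h b h * (rep (h^-1 * g)%g == g)%:R)).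
rewrite exchange_big /=; apply: eq_bigr => h _; by rewrite mulr_sumr.
Qed.
End Galg.

End Part1.
Import Part1.

Module Part2.

Section Grp.
Variables (gT : finGroupType) (x y : gT) (m k : nat) (t : int).
Hypotheses (hm : m = (3 * k).+1) (hgcd : gcdz (Posz m) (t - 1)%R = 1%N)
  (hgen : <<[set x; y]>>%g = [set: gT]) (ox : #[x]%g = m) (oy : #[y]%g = 3)
  (hxy : (x ^ y)%g = (x ^+ `|(t %% Posz m)%Z|%N)%g) (hcard : #|[set: gT]| = 3 * m).

Local Open Scope group_scope.
Let H := <[x]>.
Let Y := <[y]>.

Lemma normH g : H :^ g = H.
Proof.
apply/normP; have : [set: gT] \subset 'N(H).
  rewrite -hgen gen_subG; apply/subsetP=> z; rewrite !inE => /orP[]/eqP->.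
    by rewrite -cycleJ conjgE mulKg cycle_subG cycle_id.
  by rewrite -cycleJ hxy cycleX.
by move/subsetP; apply; rewrite inE.
Qed.

Lemma memJH z g : (z ^ g \in H) = (z \in H).
Proof. by rewrite -{1}(normH g) memJ_conjg. Qed.

Lemma HY1 : H :&: Y = 1.
Proof.
apply: coprime_TIg; rewrite -/#[x] -/#[y] ox oy hm.
by rewrite coprime_sym prime_coprime // -[(3 * k).+1]addn1 (dvdn_addr _ (dvdn_mulr _ (dvdnn 3))).
Qed.


Lemma cardH : #|H| = m. Proof. exact: ox. Qed.
Lemma cardY : #|Y| = 3. Proof. exact: oy. Qed.

Lemma HYT : H * Y = [set: gT].
Proof.
apply/eqP; rewrite eqEcard subsetT hcard.
have := mul_cardG H Y; rewrite HY1 cards1 muln1 cardH cardY => <-.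
by rewrite mulnC leqnn.
Qed.

Lemma decomp g : exists2 h, h \in H & h^-1 * g \in Y.
Proof.
have : g \in H * Y by rewrite HYT inE.
case/mulsgP => h u hH uY ->; exists h => //; by rewrite mulKg.
Qed.

Definition rep g := odflt 1 [pick h in H | h^-1 * g \in Y].

Lemma repP g : rep g \in H /\ (rep g)^-1 * g \in Y.
Proof.
rewrite /rep; case: pickP => [h /andP[]//|none].
have [h hH hY] := decomp g.
by have := none h; rewrite hH hY.
Qed.

Lemma rep_uniq g h : h \in H -> h^-1 * g \in Y -> rep g = h.
Proof.
move=> hH hY; have [rH rY] := repP g.
have : (rep g)^-1 * h \in H :&: Y.
  rewrite inE groupM ?groupV //=.
  by have := groupM rY (groupVr hY); rewrite invMg invgK mulgA mulgK.
rewrite HY1 inE => /eqP/(canRL (mulKVg _)); rewrite mulg1 => ->.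
by [].
Qed.

Lemma repY g u : u \in Y -> rep (g * u) = rep g.
Proof.
move=> uY; have [rH rY] := repP g.
by apply: rep_uniq => //; rewrite mulgA groupMr.
Qed.

Lemma repin g : g^-1 * rep g \in Y.
Proof. by have [_ rY] := repP g; rewrite -(invgK (g^-1 * _)) invMg invgK groupV. Qed.


Lemma xj_fix j : (x ^+ j) ^ y = x ^+ j -> x ^+ j = 1.
Proof.
rewrite conjXg hxy -expgM => /eqP; rewrite eq_expg_mod_order ox => /eqP e.
set n := `|(t %% Posz m)%Z|%N in e.
have m0 : Posz m != 0 by rewrite hm.
have hn : Posz n = (t %% Posz m)%Z by rewrite /n gez0_abs // modz_ge0.
have d1 : (Posz m %| (Posz j * (Posz n - 1))%R)%Z.
  rewrite mulrBr mulr1 -PoszM -eqz_mod_dvd !modz_nat mulnC e.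
  by [].
have d2 : (Posz m %| (Posz j * (t - 1))%R)%Z.
  have -> : (Posz j * (t - 1) = Posz j * (Posz n - 1) + Posz j * (t %/ Posz m)%Z * Posz m)%R.
    rewrite hn {1}(divz_eq t (Posz m)); ring.
  by rewrite rpredD // dvdz_mull // dvdzz.
have cop : coprimez (Posz m) (t - 1).
  by rewrite /coprimez; move: hgcd; rewrite /gcdz => -[->].
move: d2; rewrite Gauss_dvdzl // dvdzE !absz_nat => dj.
by apply/eqP; rewrite -order_dvdn ox.
Qed.


Lemma fix_noncomm e u : e \in H -> u \in Y -> u != 1 -> commute u e -> e = 1.
Proof.
move=> eH uY u1 cue.
have yu : y \in <[u]>.
  have sub : <[u]> \subset Y by rewrite cycle_subG.
  have dv : #[u] %| 3 by rewrite -cardY order_dvdG.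
  have o3 : #[u] = 3.
    have n1 : (#[u] != 1)%N by rewrite order_eq1.
    have /primeP[_ pd] : prime 3 by [].
    by case/orP: (pd _ dv) => /eqP // h; rewrite h in n1.
  have eqY : <[u]> = Y by apply/eqP; rewrite eqEcard sub /= cardY -o3.
  by rewrite eqY cycle_id.
have [i yi] := cycleP _ _ yu.
have [j ej] := cycleP _ _ eH.
rewrite ej; apply: xj_fix; rewrite -ej yi; apply/conjg_fixP.
apply/commgP; apply: commuteX; exact: commute_sym.
Qed.

Definition cnt h := #|[set g | rep (h^-1 * g) == g]|.

Lemma fixE h g : (rep (h^-1 * g) == g) = (g \in H) && ((h^-1) ^ g \in Y).
Proof.
apply/eqP/andP => [e|[gH gY]].
  have [rH rY] := repP (h^-1 * g); rewrite e in rH rY.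
  by split => //; rewrite conjgE -mulgA.
by apply: rep_uniq => //; rewrite mulgA -conjgE.
Qed.

Lemma cnt1 : cnt 1 = m.
Proof.
rewrite /cnt -cardH; apply: eq_card => g; rewrite inE fixE invg1 conj1g group1.
by rewrite andbT.
Qed.

Lemma cntH h : h \in H -> h != 1 -> cnt h = 0%N.
Proof.
move=> hH h1; apply/eqP; rewrite cards_eq0; apply/eqP/setP => g.
rewrite !inE fixE; apply/negP => /andP[gH gY].
have : (h^-1) ^ g \in H :&: Y by rewrite inE gY groupJ ?groupV.
rewrite HY1 inE conjg_eq1 eq_invg1 => /eqP h1'.
by rewrite h1' eqxx in h1.
Qed.

Lemma commH a b : a \in H -> b \in H -> commute a b.
Proof.
by move=> /cycleP[i ->] /cycleP[j ->]; apply: commuteX2.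
Qed.

Lemma cntN h : h \notin H -> cnt h = 1%N.
Proof.
move=> hH; set d := h^-1.
have dH : d \notin H by rewrite /d groupV.
have [h0 h0H u0Y] := decomp d; set u0 := h0^-1 * d in u0Y.
have u0H : u0 \notin H by rewrite /u0 groupMl ?groupV.
have u01 : u0 != 1 by apply: contraNneq u0H => ->; rewrite group1.
have inj : {in H &, injective (fun g => d ^ g)}.
  move=> g1 g2 g1H g2H /= e12.
  have ce : commute d (g1 * g2^-1).
    by apply/commgP/conjg_fixP; rewrite conjgM e12 -conjgM mulgV conjg1.
  have e1 := fix_noncomm (groupM g1H (groupVr g2H)) u0Y u01.
  suff /e1 /eqP : commute u0 (g1 * g2^-1) by rewrite mulg_eq1 invgK => /eqP.
  apply: commute_sym; rewrite /u0; apply: commuteM; last exact: commute_sym.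
  by apply/commuteV/commH => //; rewrite groupM ?groupV.
have imH : [set d ^ g | g in H] = d *: H.
  apply/eqP; rewrite eqEcard card_lcoset card_in_imset // leqnn andbT.
  apply/subsetP => _ /imsetP[g gH ->]; rewrite mem_lcoset conjgE !mulgA.
  by rewrite groupMr // -mulgA -conjgE memJH groupV.
have u0dH : u0 \in d *: H by rewrite mem_lcoset /u0 -conjgE memJH groupV.
have dHY v : v \in d *: H -> v \in Y -> v = u0.
  move=> vdH vY.
  have : u0^-1 * v \in H :&: Y.
    rewrite inE (groupM (groupVr u0Y) vY) andbT.
    move: u0dH vdH; rewrite !mem_lcoset => a b.
    by have := groupM (groupVr a) b; rewrite invMg invgK !mulgA mulgK.
  by rewrite HY1 inE => /eqP/(canRL (mulKVg _)); rewrite mulg1.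
move: u0dH; rewrite -imH => /imsetP[g0 g0H e0].
rewrite /cnt (_ : [set g | _] = [set g0]) ?cards1 //.
apply/setP => g; rewrite inE in_set1 fixE -/d; apply/andP/eqP => [[gH gY]|->].
  apply: inj => //=; rewrite -e0; apply: dHY => //.
  by rewrite -imH; apply: imset_f.
by rewrite -e0.
Qed.
End Grp.

End Part2.
Import Part2.

Local Open Scope ring_scope.

Lemma sum_ind (F : finFieldType) (gT : finGroupType) (P : pred gT) :
  \sum_g (P g)%:R = (#|[set g | P g]|%:R : F).
Proof.
rewrite (bigID P) /= [X in _ + X]big1 => [|g /negPf ->]; last by [].
rewrite addr0 (eq_bigr (fun _ => 1)) => [|g ->]; last by [].
by rewrite sumr_const cardsE.
Qed.

Section Ideal.
Variables (F : finFieldType) (gT : finGroupType) (H : {group gT}).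
Hypothesis nH : forall z w, (z ^ w \in H)%g = (z \in H).

Definition I0 := [set a : galg F gT | [forall g, \sum_(h in H) a (g * h)%g == 0]].

Lemma I0P (a : galg F gT) : reflect (forall g, \sum_(h in H) a (g * h)%g = 0) (a \in I0).
Proof.
rewrite inE; apply: (iffP forallP) => [E g|E g]; first exact/eqP.
exact/eqP.
Qed.

Lemma I0_ideal : two_sided_idealb I0 && [forall h in H, gdelta F h - gdelta F 1%g \in I0].
Proof.
apply/andP; split; last first.
  apply/forall_inP => h hH; apply/I0P => g.
  have E z : \sum_(h' in H) (g * h' == z)%g%:R = ((g^-1 * z)%g \in H)%:R :> F.
    case: (boolP (g^-1 * z \in H)%g) => zH.
      rewrite (bigD1 (g^-1 * z)%g) //= mulKVg eqxx big1 ?addr0 // => h' /andP[_ hn].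
      by case: eqP => // e; rewrite -e mulKg eqxx in hn.
    rewrite big1 // => h' h'H; case: eqP => // e.
    by move: zH; rewrite -e mulKg h'H.
  under eq_bigr do rewrite !ffunE.
  by rewrite sumrB !E mulg1 groupMr ?subrr.
apply/andP; split.
  apply/and3P; split.
  - by apply/I0P => g; rewrite big1 // => h _; rewrite ffunE.
  - apply/forall_inP => a /I0P aI; apply/forall_inP => b /I0P bI; apply/I0P => g.
    by under eq_bigr do rewrite !ffunE; rewrite sumrB aI bI subrr.
  - apply/forallP => r; apply/forall_inP => a /I0P aI; apply/I0P => g.
    under eq_bigr do rewrite ffunE.
    rewrite exchange_big /= big1 // => u _.
    by rewrite -mulr_sumr; under eq_bigr do rewrite mulgA; rewrite aI mulr0.
apply/forallP => r; apply/forall_inP => a /I0P aI; apply/I0P => g.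
under eq_bigr => h _.
  rewrite ffunE (reindex_inj (mulgI (g * h)%g)) /=.
  under eq_bigr do rewrite invMg mulgKV.
  over.
rewrite exchange_big /= big1 // => w _.
rewrite -mulr_suml.
rewrite (reindex_inj (@conjg_inj _ w^-1%g)) /=.
rewrite (eq_bigl (fun j => j \in H)) => [|j]; last by rewrite nH.
under eq_bigr do rewrite conjgE invgK !mulgA mulgKV.
by rewrite aI mul0r.
Qed.
End Ideal.

Lemma gmul_delta (F : finFieldType) (gT : finGroupType) (g0 : gT) (a : galg F gT) h :
  gmul (gdelta F g0^-1%g) a h = a (g0 * h)%g.
Proof.
rewrite ffunE (bigD1 g0^-1%g) //= big1 => [|u /negPf un].
  by rewrite ffunE eqxx mul1r invgK addr0.
by rewrite ffunE un mul0r.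
Qed.

Local Close Scope ring_scope.

Theorem proposition3p8 (F : finFieldType) (gT : finGroupType)
    (k : nat) (m : nat) (t : int) (x y : gT) :
  (3 \in [pchar F])%R ->
  m = (3 * k).+1 ->
  (t ^+ 3 == 1 %[mod Posz m])%Z ->
  gcdz (Posz m) (t - 1)%R = 1%N ->
  <<[set x; y]>>%g = [set: gT] ->
  #[x]%g = m ->
  #[y]%g = 3 ->
  (x ^ y)%g = (x ^+ `|(t %% Posz m)%Z|%N)%g ->
  #|[set: gT]| = 3 * m ->
  jacobson F gT :&: rel_aug_ideal F <[x]>%g = [set (0%R : galg F gT)].
Proof.
Local Open Scope ring_scope.
move=> p3 hm _ hgcd hgen ox oy hxy hcard.
have m1 : (m%:R : F) = 1.
  by rewrite hm -addn1 natrD natrM (pcharf0 p3) mul0r add0r.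
have nH z w : (z ^ w \in <[x]>%G)%g = (z \in <[x]>%G) := memJH hgen hxy z w.
have cntF h : ((cnt x y h)%:R : F) = ((h == 1%g) || (h \notin <[x]>%g))%:R.
  case: (eqVneq h 1%g) => [->|h1] /=; first by rewrite (cnt1 hm ox oy hcard) m1.
  case: (boolP (h \in <[x]>%g)) => hH /=.
    by rewrite (cntH hm ox oy hcard hH h1).
  by rewrite (cntN hm hgcd hgen ox oy hxy hcard hH).
apply/setP => a; rewrite !inE; apply/andP/eqP => [[aJ aD]|->]; last first.
  split.
    by apply/bigcapP => I /and3P[/lidP[I0 _ _] _ _].
  by apply/bigcapP => I /andP[/andP[/lidP[I0 _ _] _] _].
have : a \in I0 F <[x]>%G.
  by move/bigcapP: aD; apply; exact: (I0_ideal F nH).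
move/I0P => aI.
have sh h : \sum_g a (g * h)%g = \sum_g a g.
  by rewrite [RHS](reindex_inj (mulIg h)).
have S0 : \sum_g a g = 0.
  have : \sum_(h in <[x]>%G) \sum_g a (g * h)%g = 0.
    by rewrite exchange_big big1.
  under eq_bigr do rewrite sh.
  by rewrite sumr_const -/#[x]%g ox -mulr_natr m1 mulr1.
apply/ffunP => g0; rewrite ffunE.
have := trJ (repY hm ox oy hcard) (repin hm ox oy hcard) (J_left (gdelta F g0^-1%g) aJ).
rewrite trMx.
rewrite (eq_bigr (fun h => a (g0 * h)%g * ((h == 1%g)%:R + (h \notin <[x]>%g)%:R))).
  under eq_bigr do rewrite mulrDr.
  rewrite big_split /= (bigD1 1%g) //= eqxx mulr1 mulg1 big1 => [|h /negPf ->]; last by rewrite mulr0.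
  rewrite addr0 (bigID (fun h => h \in <[x]>%g)) /= big1 => [|h ->]; last by rewrite mulr0.
  rewrite add0r (eq_bigr (fun h => a (g0 * h)%g)) => [|h /negPf ->]; last by rewrite mulr1.
  have E : \sum_h a (g0 * h)%g = \sum_(h in <[x]>%g) a (g0 * h)%g +
      \sum_(h | h \notin <[x]>%g) a (g0 * h)%g by rewrite (bigID (fun h => h \in <[x]>%g)).
  have sh' : \sum_h a (g0 * h)%g = \sum_g a g by rewrite [RHS](reindex_inj (mulgI g0)).
  move: E; rewrite sh' S0 aI add0r => <-.
  by rewrite addr0.
move=> h _; rewrite gmul_delta sum_ind; congr (_ * _).
have -> : #|[set g | rep x y (h^-1 * g)%g == g]| = cnt x y h by [].
rewrite cntF; case: eqP => [->|_] /=; last by rewrite add0r.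
by rewrite group1 addr0.
Qed.
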